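(* Let $m\ge 1$ and let $(\phi_n)_{n\ge 0}$ be vectors in $\mathbb{R}^m$ such that $A_n=\phi_n\phi_n^\top$ satisfies $0\le A_n\le I$ for all $n$. Define $\Phi(i,i)=I$ and $\Phi(n+1,i)=(I-A_n)\Phi(n,i)$ for $n\ge i$. Let $(\mu_j)_{j\ge 0}$ be nonnegative weights, and for $k<N$ let $S_{Nk}=\sum_{j=k}^{N-1}\mu_jA_j$ and $B_{jk}=\sum_{l=k}^{j-1}(\phi_j^\top\phi_l)^2$. Let $(t_k)_{k\ge 0}$ be a strictly increasing sequence of nonnegative integers (so $t_k\to\infty$). If $$\sum_{k=1}^\infty\frac{\lambda_{\min}(S_{t_kt_{k-1}})}{\left(\sqrt{\max_{t_{k-1}\le j<t_k}\mu_j}+\sqrt{\sum_{j=t_{k-1}}^{t_k-1}\mu_jB_{jt_{k-1}}}\right)^2}=\infty$$ (with all denominators nonzero), then $\Phi(n,0)\to 0$ as $n\to\infty$.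
   Context: $\lambda_{\min}$ denotes the smallest eigenvalue of a symmetric matrix; $0\le A\le I$ is in the Loewner order; convergence of matrices is in any norm. *)

(* Defs.v *)
From HB Require Import structures.
From mathcomp Require Import all_boot all_order all_algebra.
From mathcomp Require Import all_classical all_reals all_analysis.
Set Implicit Arguments. Unset Strict Implicit. Unset Printing Implicit Defensive.
Import Order.TTheory GRing.Theory Num.Theory.
Import numFieldNormedType.Exports.
Local Open Scope classical_set_scope.
Local Open Scope ring_scope.

Definition psd (R : realType) (m : nat) (M : 'M[R]_m) : Prop :=
  forall x : 'cV[R]_m, 0 <= (x^T *m M *m x) 0 0.

Definition loewner_le (R : realType) (m : nat) (A B : 'M[R]_m) : Prop :=
  psd (B - A).

Definition lambda_min (R : realType) (m : nat) (M : 'M[R]_m) : R :=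
  inf [set a : R | eigenvalue M a].

Fixpoint Phi (R : realType) (m : nat) (A : nat -> 'M[R]_m) (n i : nat) : 'M[R]_m :=
  match n with
  | 0 => 1%:M
  | n'.+1 => if (i <= n')%N then (1%:M - A n') *m Phi A n' i else 1%:M
  end.

Definition outer (R : realType) (m : nat) (phi : 'cV[R]_m) : 'M[R]_m :=
  phi *m phi^T.

Definition Smat (R : realType) (m : nat) (A : nat -> 'M[R]_m) (mu : nat -> R)
  (N k : nat) : 'M[R]_m := \sum_(k <= j < N) mu j *: A j.

Definition Bsum (R : realType) (m : nat) (phi : nat -> 'cV[R]_m) (j k : nat) : R :=
  \sum_(k <= l < j) ((phi j)^T *m phi l) 0 0 ^+ 2.

Definition maxmu (R : realType) (mu : nat -> R) (a b : nat) : R :=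
  \big[Num.max/0]_(a <= j < b) mu j.

Definition denom (R : realType) (m : nat) (phi : nat -> 'cV[R]_m) (mu : nat -> R)
  (a b : nat) : R :=
  (Num.sqrt (maxmu mu a b) + Num.sqrt (\sum_(a <= j < b) mu j * Bsum phi j a)) ^+ 2.

(* Main.v *)
Set Warnings "-all".
Require Import Defs.
From HB Require Import structures.
From mathcomp Require Import all_boot all_order all_algebra.
From mathcomp Require Import all_classical all_reals all_analysis.
From mathcomp Require Import ring lra.
Import Order.TTheory GRing.Theory Num.Theory.
Import numFieldNormedType.Exports.
Local Open Scope classical_set_scope.
Local Open Scope ring_scope.
Set Implicit Arguments. Unset Strict Implicit.
Section S.
Variable R : realType.

Lemma discr (A B C : R) : 0 <= C -> (forall t, 0 <= A + 2 * t * B + t ^+ 2 * C) -> B ^+ 2 <= A * C.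
Proof.
move=> C0 H.
have [Cgt|Ceq] := boolP (0 < C).
  have := H (- B / C).
  have -> : A + 2 * (- B / C) * B + (- B / C) ^+ 2 * C = A - B ^+ 2 / C.
    by field; by rewrite gt_eqF.
  rewrite subr_ge0 ler_pdivrMr // => h; by rewrite mulrC.
have C00 : C = 0 by apply/eqP; rewrite eq_le C0 andbT leNgt.
subst C.
have [B0|Bn0] := eqVneq B 0; first by rewrite B0 expr0n /= mulr0.
have := H (- (A + 1) / (2 * B)).
have -> : A + 2 * (- (A + 1) / (2 * B)) * B + (- (A + 1) / (2 * B)) ^+ 2 * 0 = -1.
  by field; rewrite Bn0.
by rewrite ler0N1.
Qed.

Lemma cs_w (I : Type) (r : seq I) (P : pred I) (w a b : I -> R) :
  (forall i, P i -> 0 <= w i) ->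
  (\sum_(i <- r | P i) w i * a i * b i) ^+ 2 <=
  (\sum_(i <- r | P i) w i * a i ^+ 2) * (\sum_(i <- r | P i) w i * b i ^+ 2).
Proof.
move=> w0; apply: discr.
  by apply: sumr_ge0 => i Pi; rewrite mulr_ge0 ?sqr_ge0 ?w0.
move=> t.
have -> : \sum_(i <- r | P i) w i * a i ^+ 2 + 2 * t * (\sum_(i <- r | P i) w i * a i * b i)
   + t ^+ 2 * (\sum_(i <- r | P i) w i * b i ^+ 2) = \sum_(i <- r | P i) w i * (a i + t * b i) ^+ 2.
  rewrite !mulr_sumr -!big_split /=; apply: eq_bigr => i _; ring.
by apply: sumr_ge0 => i Pi; rewrite mulr_ge0 ?sqr_ge0 ?w0.
Qed.

Lemma mink_w (I : Type) (r : seq I) (P : pred I) (w a b : I -> R) :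
  (forall i, P i -> 0 <= w i) ->
  \sum_(i <- r | P i) w i * (a i + b i) ^+ 2 <=
  (Num.sqrt (\sum_(i <- r | P i) w i * a i ^+ 2) + Num.sqrt (\sum_(i <- r | P i) w i * b i ^+ 2)) ^+ 2.
Proof.
move=> w0.
set U := \sum_(i <- r | P i) w i * a i ^+ 2.
set V := \sum_(i <- r | P i) w i * b i ^+ 2.
set W := \sum_(i <- r | P i) w i * a i * b i.
have U0 : 0 <= U by apply: sumr_ge0 => i Pi; rewrite mulr_ge0 ?sqr_ge0 ?w0.
have V0 : 0 <= V by apply: sumr_ge0 => i Pi; rewrite mulr_ge0 ?sqr_ge0 ?w0.
have -> : \sum_(i <- r | P i) w i * (a i + b i) ^+ 2 = U + 2 * W + V.
  rewrite /U /V /W mulr_sumr -!big_split /=; apply: eq_bigr => i _; ring.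
have hW : W <= Num.sqrt U * Num.sqrt V.
  rewrite -sqrtrM //.
  apply: (le_trans (ler_norm W)).
  rewrite -sqrtr_sqr; rewrite ler_sqrt ?mulr_ge0 //.
  exact: cs_w.
have e : (Num.sqrt U + Num.sqrt V) ^+ 2 = U + 2 * (Num.sqrt U * Num.sqrt V) + V.
  by rewrite sqrrD !sqr_sqrtr // mulr2n -mulr_natl; ring.
rewrite e; lra.
Qed.

End S.

Section Dot.
Variable R : realType.
Variable n : nat.
Implicit Types u v w : 'cV[R]_n.

Definition dot u v : R := (u^T *m v) 0 0.

Lemma dotE u v : dot u v = \sum_i u i 0 * v i 0.
Proof. by rewrite /dot mxE; apply: eq_bigr => i _; rewrite mxE. Qed.

Lemma dotC u v : dot u v = dot v u.
Proof. by rewrite !dotE; apply: eq_bigr => i _; rewrite mulrC. Qed.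

Lemma dotDr u v w : dot u (v + w) = dot u v + dot u w.
Proof. by rewrite !dotE -big_split; apply: eq_bigr => i _; rewrite mxE mulrDr. Qed.

Lemma dotDl u v w : dot (v + w) u = dot v u + dot w u.
Proof. by rewrite dotC dotDr !(dotC u). Qed.

Lemma dotZr a u v : dot u (a *: v) = a * dot u v.
Proof. by rewrite !dotE mulr_sumr; apply: eq_bigr => i _; rewrite mxE; ring. Qed.

Lemma dotZl a u v : dot (a *: v) u = a * dot v u.
Proof. by rewrite dotC dotZr dotC. Qed.

Lemma dotNr u v : dot u (- v) = - dot u v.
Proof. by rewrite -scaleN1r dotZr mulN1r. Qed.

Lemma dotBr u v w : dot u (v - w) = dot u v - dot u w.
Proof. by rewrite dotDr dotNr. Qed.

Lemma dotBl u v w : dot (v - w) u = dot v u - dot w u.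
Proof. by rewrite dotC dotBr !(dotC u). Qed.

Lemma dot0r u : dot u 0 = 0.
Proof. by rewrite dotE big1 // => i _; rewrite mxE mulr0. Qed.

Lemma dot0l u : dot 0 u = 0.
Proof. by rewrite dotC dot0r. Qed.

Lemma dot_sumr u (I : Type) (r : seq I) (P : pred I) (F : I -> 'cV[R]_n) :
  dot u (\sum_(i <- r | P i) F i) = \sum_(i <- r | P i) dot u (F i).
Proof. exact: (big_morph (dot u) (dotDr u) (dot0r u)). Qed.

Lemma dot_ge0 u : 0 <= dot u u.
Proof. by rewrite dotE; apply: sumr_ge0 => i _; rewrite -expr2 sqr_ge0. Qed.

Lemma dot_eq0 u : dot u u = 0 -> u = 0.
Proof.
rewrite dotE => /eqP; rewrite psumr_eq0; last by move=> i _; rewrite -expr2 sqr_ge0.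
move=> /allP h; apply/matrixP => i j; rewrite (ord1 j) mxE.
have := h i (mem_index_enum i); rewrite -expr2 sqrf_eq0 => /implyP/(_ isT)/eqP; done.
Qed.

Lemma dot_cs u v : dot u v ^+ 2 <= dot u u * dot v v.
Proof.
rewrite !dotE.
have := @cs_w R _ (index_enum 'I_n) xpredT (fun _ => 1) (fun i => u i 0) (fun i => v i 0) (fun _ _ => ler01).
rewrite /=.
have e : forall f : 'I_n -> R, \sum_i f i = \sum_(i <- index_enum 'I_n | xpredT i) f i by [].
rewrite (e (fun i => u i 0 * v i 0)) (e (fun i => u i 0 * u i 0)) (e (fun i => v i 0 * v i 0)).
have -> : \sum_(i <- index_enum 'I_n | xpredT i) u i 0 * v i 0 = \sum_(i <- index_enum 'I_n | xpredT i) 1 * u i 0 * v i 0 by apply: eq_bigr => i _; ring.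
have -> : \sum_(i <- index_enum 'I_n | xpredT i) u i 0 * u i 0 = \sum_(i <- index_enum 'I_n | xpredT i) 1 * u i 0 ^+ 2 by apply: eq_bigr => i _; ring.
have -> : \sum_(i <- index_enum 'I_n | xpredT i) v i 0 * v i 0 = \sum_(i <- index_enum 'I_n | xpredT i) 1 * v i 0 ^+ 2 by apply: eq_bigr => i _; ring.
exact.
Qed.

Lemma dot_sym (M : 'M[R]_n) u v : M^T = M -> dot u (M *m v) = dot v (M *m u).
Proof.
move=> hM.
have E1 : forall a b : 'cV[R]_n, dot a (M *m b) = \sum_i \sum_j a i 0 * M i j * b j 0.
  move=> a b; rewrite dotE; apply: eq_bigr => i _; rewrite mxE big_distrr; apply: eq_bigr => j _ /=; ring.
rewrite !E1 exchange_big; apply: eq_bigr => i _; apply: eq_bigr => j _.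
have : M^T i j = M i j by rewrite hM.
rewrite mxE => ->; ring.
Qed.

Lemma cs_psd (M : 'M[R]_n) : M^T = M -> (forall x, 0 <= dot x (M *m x)) ->
  forall u v, dot u (M *m v) ^+ 2 <= dot u (M *m u) * dot v (M *m v).
Proof.
move=> hM h u v; apply: discr; first exact: h.
move=> t; have := h (u + t *: v).
rewrite mulmxDr -scalemxAr !dotDl !dotDr !dotZl !dotZr (dot_sym v u hM).
move=> H; apply: (le_trans H); rewrite le_eqVlt; apply/orP; left; apply/eqP; ring.
Qed.

Lemma dot_delta (i : 'I_n) w : dot (delta_mx i 0) w = w i 0.
Proof. by rewrite /dot trmx_delta -rowE mxE. Qed.

End Dot.

Section Rayleigh.
Variable R : realType.
Variable n : nat.

Lemma row_col_mul (N : 'M[R]_n.+1) (v : 'cV[R]_n.+1) i : (N *m v) i 0 = dot (row i N)^T v.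
Proof. by rewrite dotE mxE; apply: eq_bigr => j _; rewrite !mxE. Qed.

Lemma dotN_le (N : 'M[R]_n.+1) (v : 'cV[R]_n.+1) :
  dot (N *m v) (N *m v) <= (\sum_i dot (row i N)^T (row i N)^T) * dot v v.
Proof.
rewrite [X in X <= _]dotE mulr_suml; apply: ler_sum => i _.
rewrite row_col_mul -expr2; exact: dot_cs.
Qed.

Lemma dotM_le (M : 'M[R]_n.+1) (u : 'cV[R]_n.+1) : M^T = M -> (forall x, 0 <= dot x (M *m x)) ->
  dot (M *m u) (M *m u) <= (\sum_i M i i) * dot u (M *m u).
Proof.
move=> hM h.
rewrite [X in X <= _]dotE mulr_suml; apply: ler_sum => i _.
have e1 : (M *m u) i 0 = dot (delta_mx i 0) (M *m u) by rewrite dot_delta.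
have e2 : M i i = dot (delta_mx i 0) (M *m delta_mx i 0) by rewrite dot_delta -colE mxE.
rewrite e1 -expr2 e2; exact: cs_psd.
Qed.

Lemma e0_unit : dot (delta_mx (0 : 'I_n.+1) (0 : 'I_1)) (delta_mx 0 0) = 1 :> R.
Proof. by rewrite dot_delta mxE !eqxx. Qed.

Lemma rayleigh (S : 'M[R]_n.+1) : S^T = S -> (forall x, 0 <= dot x (S *m x)) ->
  forall y, lambda_min S * dot y y <= dot y (S *m y).
Proof.
move=> hS hpsd.
pose E := [set r : R | exists u, dot u u = 1 /\ r = dot u (S *m u)].
have En : E !=set0 by exists (dot (delta_mx 0 0) (S *m delta_mx 0 0)); exists (delta_mx 0 0); rewrite e0_unit.
have Elb : has_lbound E by exists 0 => r [u [_ ->]]; exact: hpsd.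
pose c := inf E.
have hc : forall u, c * dot u u <= dot u (S *m u).
  move=> u; have [u0|un0] := eqVneq (dot u u) 0.
    by rewrite (dot_eq0 u0) !dot0l mulr0.
  have up : 0 < dot u u by rewrite lt_neqAle eq_sym un0 dot_ge0.
  pose s := Num.sqrt (dot u u).
  have sp : 0 < s by rewrite sqrtr_gt0.
  have s2 : s ^+ 2 = dot u u by rewrite sqr_sqrtr // dot_ge0.
  pose w := s^-1 *: u.
  have ww : dot w w = 1.
    rewrite /w dotZl dotZr -s2; field; by rewrite gt_eqF.
  have : c <= dot w (S *m w) by apply: (ge_inf Elb); exists w.
  rewrite /w -scalemxAr dotZl dotZr -s2 => H.
  have H' : c * s ^+ 2 <= s ^+ 2 * (s^-1 * (s^-1 * dot u (S *m u))).
    by rewrite mulrC ler_wpM2l // sqr_ge0.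
  apply: (le_trans H'); rewrite le_eqVlt; apply/orP; left; apply/eqP; field; by rewrite gt_eqF.
pose M := S - c%:M.
have hMt : M^T = M by rewrite /M linearB /= hS tr_scalar_mx.
have QM : forall u, dot u (M *m u) = dot u (S *m u) - c * dot u u.
  by move=> u; rewrite /M mulmxBl mul_scalar_mx dotBr dotZr.
have Mpsd : forall u, 0 <= dot u (M *m u) by move=> u; rewrite QM subr_ge0.
have detM : \det M == 0.
  apply/negPn/negP => hdet.
  have Mu : M \in unitmx by rewrite unitmxE unitfE.
  pose N := invmx M.
  pose P := (\sum_i dot (row i N)^T (row i N)^T) * (\sum_i M i i).
  have Mii : forall i, M i i = dot (delta_mx i 0) (M *m delta_mx i 0).
    by move=> i; rewrite dot_delta -colE [RHS]mxE.
  have P0 : 0 <= P.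
    apply: mulr_ge0; apply: sumr_ge0 => i _; first exact: dot_ge0.
    rewrite Mii; exact: Mpsd.
  have key : forall u, dot u u = 1 -> 1 <= P * dot u (M *m u).
    move=> u hu.
    have e : u = N *m (M *m u) by rewrite mulKmx.
    have h1 := dotN_le N (M *m u).
    rewrite -e hu in h1.
    have h2 := dotM_le u hMt Mpsd.
    rewrite /P -mulrA; apply: (le_trans h1); apply: ler_wpM2l => //.
    by apply: sumr_ge0 => i _; exact: dot_ge0.
  have Pp : 0 < P.
    rewrite lt_neqAle P0 andbT; apply/eqP => P00.
    by have := key _ e0_unit; rewrite -P00 mul0r ler10.
  have lb : lbound E (c + P^-1).
    move=> r [u [hu ->]]; have := key u hu; rewrite QM hu mulr1 => h.
    have : P^-1 * 1 <= P^-1 * (P * (dot u (S *m u) - c)) by rewrite ler_wpM2l // invr_ge0 ltW.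
    rewrite mulr1 mulrA mulVf ?gt_eqF // mul1r; lra.
  have := lb_le_inf En lb; rewrite -/c.
  have : 0 < P^-1 by rewrite invr_gt0.
  lra.
have /det0P [v vn0 vM] := detM.
have ceig : eigenvalue S c.
  apply/eigenvalueP; exists v => //; move: vM; rewrite /M mulmxBr mul_mx_scalar => /eqP.
  by rewrite subr_eq0 => /eqP.
have eiglb : lbound [set a | eigenvalue S a] c.
  move=> a /eigenvalueP [v' hv' v'n0].
  pose u := v'^T.
  have Su : S *m u = a *: u.
    have : (v' *m S)^T = (a *: v')^T by rewrite hv'.
    by rewrite trmx_mul hS linearZ.
  have un0 : dot u u != 0.
    apply/eqP => /dot_eq0 h; move/negP: v'n0; apply; apply/eqP.
    by rewrite -(trmxK v') -/u h trmx0.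
  have up : 0 < dot u u by rewrite lt_neqAle eq_sym un0 dot_ge0.
  by have := hc u; rewrite Su dotZr ler_pM2r.
have Hinf : lambda_min S <= c.
  rewrite /lambda_min; apply: (ge_inf _ ceig).
  by exists c.
move=> y; apply: le_trans (hc y); by rewrite ler_wpM2r ?dot_ge0.
Qed.
End Rayleigh.

Section Dyn.
Variable R : realType.
Variable m : nat.
Variable phi : nat -> 'cV[R]_m.
Hypothesis hA : forall n, loewner_le 0 (outer (phi n)) /\ loewner_le (outer (phi n)) 1%:M.
Variable x : 'cV[R]_m.

Lemma outer_mul (p : 'cV[R]_m) y : outer p *m y = dot p y *: p.
Proof. by rewrite /outer -mulmxA (mx11_scalar (p^T *m y)) mul_mx_scalar. Qed.

Definition X k := Phi (fun j => outer (phi j)) k 0 *m x.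
Definition s k := dot (phi k) (X k).
Definition q k := dot (X k) (X k).

Lemma X_S k : X k.+1 = X k - s k *: phi k.
Proof. by rewrite /X /= -mulmxA mulmxBl mul1mx outer_mul. Qed.

Lemma phi_norm k : dot (phi k) (phi k) <= 1.
Proof.
have := (hA k).2 (phi k).
rewrite -mulmxA -/(dot _ _) mulmxBl mul1mx outer_mul dotBr dotZr.
have := dot_ge0 (phi k); nra.
Qed.

Lemma q_ge0 k : 0 <= q k.
Proof. exact: dot_ge0. Qed.

Lemma q_step k : q k.+1 <= q k - s k ^+ 2.
Proof.
rewrite /q X_S dotBl !dotBr !dotZl !dotZr (dotC (X k) (phi k)) -/(s k).
have := phi_norm k; have := sqr_ge0 (s k).
set p := dot (phi k) (phi k); nra.
Qed.

Lemma q_tel a b : (a <= b)%N -> q b + \sum_(a <= l < b) s l ^+ 2 <= q a.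
Proof.
elim: b => [|b IH] hab.
  by rewrite leqn0 in hab; rewrite (eqP hab) big_geq // addr0.
case: (ltngtP a b.+1) hab => // [hlt|heq] _.
  rewrite big_nat_recr //=; have := IH hlt; have := q_step b; lra.
by rewrite heq big_geq // addr0.
Qed.

Lemma q_mono a b : (a <= b)%N -> q b <= q a.
Proof.
move=> hab; have := q_tel hab.
have : 0 <= \sum_(a <= l < b) s l ^+ 2 by apply: sumr_ge0 => i _; exact: sqr_ge0.
lra.
Qed.

Lemma X_block a j : (a <= j)%N -> X j = X a - \sum_(a <= l < j) s l *: phi l.
Proof.
elim: j => [|j IH] haj.
  by rewrite leqn0 in haj; rewrite (eqP haj) big_geq // subr0.
case: (ltngtP a j.+1) haj => // [hlt|heq] _.
  by rewrite big_nat_recr //= X_S (IH hlt) opprD addrA.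
by rewrite heq big_geq // subr0.
Qed.

Lemma s_block a j : (a <= j)%N ->
  dot (phi j) (X a) = s j + \sum_(a <= l < j) dot (phi j) (phi l) * s l.
Proof.
move=> haj; rewrite /s (X_block haj) dotBr dot_sumr.
have -> : \sum_(a <= i < j) dot (phi j) (s i *: phi i) = \sum_(a <= l < j) dot (phi j) (phi l) * s l.
  by apply: eq_bigr => i _; rewrite dotZr mulrC.
rewrite -/(s a); ring.
Qed.

End Dyn.

Section Block.
Variable R : realType.
Variable n : nat.
Variable phi : nat -> 'cV[R]_n.+1.
Hypothesis hA : forall n, loewner_le 0 (outer (phi n)) /\ loewner_le (outer (phi n)) 1%:M.
Variable mu : nat -> R.
Hypothesis hmu : forall j, 0 <= mu j.
Variable x : 'cV[R]_n.+1.

Let SS a b := Smat (fun j => outer (phi j)) mu b a.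

Lemma quad_S a b y : dot y (SS a b *m y) = \sum_(a <= j < b) mu j * dot (phi j) y ^+ 2.
Proof.
rewrite /SS /Smat mulmx_suml dot_sumr; apply: eq_bigr => j _.
by rewrite -scalemxAl outer_mul !dotZr (dotC y (phi j)); ring.
Qed.

Lemma S_sym a b : (SS a b)^T = SS a b.
Proof.
rewrite /SS /Smat linear_sum; apply: eq_bigr => j _.
by rewrite linearZ /= /outer trmx_mul trmxK.
Qed.

Lemma S_psd a b y : 0 <= dot y (SS a b *m y).
Proof. by rewrite quad_S; apply: sumr_ge0 => j _; rewrite mulr_ge0 ?sqr_ge0. Qed.

Lemma block_ineq a b : (a <= b)%N ->
  lambda_min (SS a b) * q phi x a <= denom phi mu a b * \sum_(a <= l < b) s phi x l ^+ 2.
Proof.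
move=> hab.
set D := \sum_(a <= l < b) s phi x l ^+ 2.
have D0 : 0 <= D by apply: sumr_ge0 => i _; exact: sqr_ge0.
apply: le_trans (rayleigh (S_sym a b) (@S_psd a b) (X phi x a)) _.
rewrite quad_S.
have e : \sum_(a <= j < b) mu j * dot (phi j) (X phi x a) ^+ 2 =
   \sum_(j <- index_iota a b | xpredT j) mu j * (s phi x j + \sum_(a <= l < j) dot (phi j) (phi l) * s phi x l) ^+ 2.
  rewrite big_seq_cond [RHS]big_seq_cond; apply: eq_bigr => j /andP [hj _].
  rewrite mem_index_iota in hj; case/andP: hj => hj _.
  by rewrite s_block.
rewrite e; apply: le_trans (@mink_w R _ (index_iota a b) xpredT mu (s phi x) (fun j => \sum_(a <= l < j) dot (phi j) (phi l) * s phi x l) (fun j _ => hmu j)) _.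
set U := \sum_(j <- _ | _) mu j * s phi x j ^+ 2.
set V := \sum_(j <- _ | _) mu j * (\sum_(a <= l < j) _) ^+ 2.
set Mx := maxmu mu a b.
set BB := \sum_(a <= j < b) mu j * Bsum phi j a.
have U0 : 0 <= U by apply: sumr_ge0 => j _; rewrite mulr_ge0 ?sqr_ge0.
have V0 : 0 <= V by apply: sumr_ge0 => j _; rewrite mulr_ge0 ?sqr_ge0.
have hU : U <= Mx * D.
  rewrite /D mulr_sumr; apply: ler_sum_nat => j hj.
  rewrite -mem_index_iota in hj.
  rewrite ler_wpM2r ?sqr_ge0 //.
  rewrite /Mx /maxmu.
  exact: (le_bigmax_seq 0 j xpredT mu hj).
have hV : V <= BB * D.
  rewrite /BB mulr_suml; apply: ler_sum_nat => j; case/andP => hj1 hj2.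
  rewrite -mulrA ler_wpM2l //.
  have hcs := @cs_w R _ (index_iota a j) xpredT (fun _ => 1) (fun l => dot (phi j) (phi l)) (s phi x) (fun _ _ => ler01).
  have e1 : \sum_(l <- index_iota a j | xpredT l) 1 * dot (phi j) (phi l) * s phi x l = \sum_(a <= l < j) dot (phi j) (phi l) * s phi x l.
    by apply: eq_bigr => l _; rewrite mul1r.
  have e2 : \sum_(l <- index_iota a j | xpredT l) 1 * dot (phi j) (phi l) ^+ 2 = Bsum phi j a.
    by apply: eq_bigr => l _; rewrite mul1r.
  have e3 : \sum_(l <- index_iota a j | xpredT l) 1 * s phi x l ^+ 2 = \sum_(a <= l < j) s phi x l ^+ 2.
    by apply: eq_bigr => l _; rewrite mul1r.
  rewrite e1 e2 e3 in hcs; apply: (le_trans hcs).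
  have B0 : 0 <= Bsum phi j a by apply: sumr_ge0 => l _; exact: sqr_ge0.
  rewrite ler_wpM2l //.
  rewrite /D (@big_cat_nat _ _ _ j a b) /=; last 2 first; [by [] | exact: ltnW |].
  rewrite lerDl; apply: sumr_ge0 => l _; exact: sqr_ge0.
have Mx0 : 0 <= Mx.
  case: (ltnP a b) => hab'.
    apply: le_trans (hmu a) _; apply: (le_bigmax_seq 0 a xpredT mu) => //.
    by rewrite mem_index_iota leqnn.
  by rewrite /Mx /maxmu big_geq.
have BB0 : 0 <= BB.
  by apply: sumr_ge0 => j _; rewrite mulr_ge0 //; apply: sumr_ge0 => l _; exact: sqr_ge0.
have sU : Num.sqrt U <= Num.sqrt Mx * Num.sqrt D by rewrite -sqrtrM // ler_sqrt // mulr_ge0.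
have sV : Num.sqrt V <= Num.sqrt BB * Num.sqrt D by rewrite -sqrtrM // ler_sqrt // mulr_ge0.
have h1 : Num.sqrt U + Num.sqrt V <= (Num.sqrt Mx + Num.sqrt BB) * Num.sqrt D by rewrite mulrDl; exact: lerD.
have h0 : 0 <= Num.sqrt U + Num.sqrt V by rewrite addr_ge0 ?sqrtr_ge0.
rewrite /denom -/Mx -/BB.
have -> : (Num.sqrt Mx + Num.sqrt BB) ^+ 2 * D = ((Num.sqrt Mx + Num.sqrt BB) * Num.sqrt D) ^+ 2.
  by rewrite exprMn sqr_sqrtr.
rewrite !expr2; exact: ler_pM.
Qed.

End Block.

Unset Implicit Arguments.
Theorem mainTheorem2 (R : realType) (m : nat) (hm : (1 <= m)%N)
  (phi : nat -> 'cV[R]_m)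
  (hA : forall n, loewner_le 0 (outer (phi n)) /\ loewner_le (outer (phi n)) 1%:M)
  (mu : nat -> R) (hmu : forall j, 0 <= mu j)
  (t : nat -> nat) (ht : forall a b, (a < b)%N -> (t a < t b)%N)
  (hden : forall k, (1 <= k)%N -> denom phi mu (t k.-1) (t k) != 0)
  (hdiv : (fun n => \sum_(1 <= k < n)
             lambda_min (Smat (fun j => outer (phi j)) mu (t k) (t k.-1))
             / denom phi mu (t k.-1) (t k)) @ \oo --> +oo) :
  (fun n => Phi (fun j => outer (phi j)) n 0) @ \oo --> (0 : 'M[R]_m).
Proof.
case: m hm phi hA hden hdiv => [//|n] _ phi hA hden hdiv.
pose r k := lambda_min (Smat (fun j => outer (phi j)) mu (t k) (t k.-1)) / denom phi mu (t k.-1) (t k).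
pose r' k := Num.max 0 (r k).
have r'0 : forall k, 0 <= r' k by move=> k; rewrite /r' le_max lexx.
have rr' : forall k, r k <= r' k by move=> k; rewrite /r' le_max lexx orbT.
have step : forall (x : 'cV[R]_n.+1) k, (1 <= k)%N ->
    q phi x (t k) <= q phi x (t k.-1) - r' k * q phi x (t k.-1).
  move=> x k hk.
  have hlt : (t k.-1 < t k)%N by apply: ht; rewrite ltn_predL.
  have hle := ltnW hlt.
  have tel := q_tel hA x hle.
  have bi := block_ineq phi hmu x hle.
  have denp : 0 < denom phi mu (t k.-1) (t k).
    by rewrite lt_neqAle eq_sym hden // /denom sqr_ge0.
  have D0 : 0 <= \sum_(t k.-1 <= l < t k) s phi x l ^+ 2 by apply: sumr_ge0 => i _; exact: sqr_ge0.
  have qa0 := q_ge0 phi x (t k.-1).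
  rewrite /r'; case: (leP 0 (r k)) => hr.
    have : r k * q phi x (t k.-1) <= \sum_(t k.-1 <= l < t k) s phi x l ^+ 2.
      rewrite /r mulrAC ler_pdivrMr // [X in _ <= X]mulrC; exact: bi.
    lra.
  rewrite mul0r subr0; lra.
have contr : forall (x : 'cV[R]_n.+1) N,
    q phi x (t N) * (1 + \sum_(1 <= k < N.+1) r' k) <= q phi x (t 0).
  move=> x; elim => [|N IH].
    by rewrite big_geq // addr0 mulr1.
  rewrite big_nat_recr //=.
  have st := step x N.+1 isT; rewrite /= in st.
  have mono := q_mono hA x (ltnW (ht N N.+1 (ltnSn N))).
  have q1 := q_ge0 phi x (t N.+1).
  have q0 := q_ge0 phi x (t N).
  have S0 : 0 <= \sum_(1 <= k < N.+1) r' k by apply: sumr_ge0 => i _.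
  have rp := r'0 N.+1.
  move: IH st mono q1 q0 S0 rp.
  set S := \sum_(1 <= k < N.+1) r' k; set a := q phi x (t N); set b := q phi x (t N.+1).
  set c := q phi x (t 0); set rho := r' N.+1.
  move=> IH st mono q1 q0 S0 rp.
  have h1 : b * (1 + S) <= (a - rho * a) * (1 + S) by rewrite ler_wpM2r // addr_ge0.
  have h2 : b * rho <= a * rho by rewrite ler_wpM2r.
  have h3 : 0 <= rho * a * S by rewrite !mulr_ge0.
  nra.
apply/cvgrPdist_lt => eps eps0.
case: ((cvgryPge _).1 hdiv (eps ^-2)) => N _ HN.
have H : eps ^-2 <= \sum_(1 <= k < N) r k := HN N (leqnn N).
have SN : eps ^-2 <= \sum_(1 <= k < N.+1) r' k.
  apply: (le_trans H); apply: le_trans (ler_sum_nat (fun k _ => rr' k)) _.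
  case: N {HN H} => [|N]; first by rewrite !big_geq.
  rewrite (big_nat_recr N.+1) //= lerDl; exact: r'0.
near=> k.
have hk : (t N <= k)%N by near: k; exact: nbhs_infty_ge.
rewrite sub0r normrN.
have -> : `|Phi (fun j => outer (phi j)) k 0| = mx_norm (Phi (fun j => outer (phi j)) k 0) by [].
rewrite mx_normrE; apply: bigmax_lt => //= -[i j] _ /=.
pose x : 'cV[R]_n.+1 := delta_mx j 0.
have e1 : Phi (fun j => outer (phi j)) k 0 i j = X phi x k i 0 by rewrite /X -colE mxE.
rewrite e1.
set v := X phi x k i 0.
have e2 : v ^+ 2 <= q phi x k.
  rewrite /q dotE (bigD1 i) //= -expr2 lerDl; apply: sumr_ge0 => l _; rewrite -expr2; exact: sqr_ge0.
have e3 : q phi x k <= q phi x (t N) := q_mono hA x hk.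
have e4 := contr x N.
have e5 : q phi x (t 0) <= 1.
  apply: le_trans (q_mono hA x (leq0n (t 0))) _.
  by rewrite /q /X /= mul1mx dot_delta mxE !eqxx.
set S := \sum_(1 <= k < N.+1) r' k in SN e4.
have S0 : 0 <= S by apply: sumr_ge0 => l _.
have e2p : 0 < eps ^+ 2 by rewrite exprn_gt0.
have S1 : 1 <= S * eps ^+ 2.
  have := ler_wpM2r (ltW e2p) SN; rewrite mulVf //; exact: lt0r_neq0.
have hv : v ^+ 2 * (1 + S) <= 1.
  apply: le_trans _ e5; apply: le_trans _ e4; apply: ler_wpM2r; first by rewrite addr_ge0.
  exact: le_trans e2 e3.
have v0 : 0 <= v ^+ 2 := sqr_ge0 v.
have hv2 : v ^+ 2 < eps ^+ 2.
  rewrite ltNge; apply/negP => hc.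
  have : eps ^+ 2 * S <= v ^+ 2 * S by rewrite ler_wpM2r.
  nra.
rewrite ltNge; apply/negP => hc.
have := ler_pM (ltW eps0) (ltW eps0) hc hc.
rewrite -!expr2 -normrX ger0_norm ?sqr_ge0 // => hc'.
by have := lt_le_trans hv2 hc'; rewrite ltxx.
Unshelve. all: by end_near.
Qed.
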